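(* Assume the setting below, with $\inf H>0$. Define $\tilde\tau:Y\to\mathbb Z^+$ by $\tilde\tau|_{Y_j}=\big[\|1_{Y_j}H\|_\theta\big]+1$ (integer part), where $\|1_{Y_j}H\|_\theta=\sup_{Y_j}|H|+\sup_{y\ne y'\in Y_j}|H(y)-H(y')|/d_\theta(y,y')$, and on $\Delta=\{(y,\ell)\in Y\times\mathbb Z:0\le\ell\le\tilde\tau(y)-1\}$ define $\tilde h(y,\ell)=H(y)/\tilde\tau(y)$. Then: (a) $H(y)=\sum_{\ell=0}^{\tilde\tau(y)-1}\tilde h(y,\ell)$ for all $y\in Y$; (b) $0<\inf\tilde h\le|\tilde h|_\infty\le1$ and $|\tilde h(y,\ell)-\tilde h(y',\ell)|\le d_\theta(y,y')$ for all $y,y'\in Y_j$, $j\ge1$, $0\le\ell\le\tilde\tau(y)-1$.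
   Context: Let $Y$ be a set with an at most countable partition $\{Y_j\}$ and a map $F:Y\to Y$; the separation time $s(y,y')$ is the least $n\ge0$ with $F^ny,F^ny'$ in distinct $Y_j$, and $d_\theta(y,y')=\theta^{s(y,y')}$ for a fixed $\theta\in(0,1)$. Let $H:Y\to(0,\infty)$ (the induced roof function of a nonuniformly expanding semiflow) satisfy: there is $C\ge1$ such that for all $j$, $\sup_{y\ne y'\in Y_j}|H(y)-H(y')|/d_\theta(y,y')\le C\inf_{Y_j}H$ (in particular $H$ is piecewise $d_\theta$-Lipschitz). *)

(* Defs.v *)
From HB Require Import structures.
From mathcomp Require Import all_boot all_order all_algebra.
From mathcomp Require Import all_classical all_reals.
Set Implicit Arguments. Unset Strict Implicit. Unset Printing Implicit Defensive.
Import Order.TTheory GRing.Theory Num.Theory.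
Local Open Scope classical_set_scope.
Local Open Scope ring_scope.

(* The partition {Y_j} of Y is encoded by an index map idx : Y -> nat,
   Y_j = [set y | idx y = j]  (an at most countable partition). *)
Definition piece (Y : Type) (idx : Y -> nat) (j : nat) : set Y := [set y | idx y = j].

Definition separated (Y : Type) (idx : Y -> nat) (F : Y -> Y) (y y' : Y) (n : nat) : Prop :=
  idx (iter n F y) <> idx (iter n F y').

Definition sep_time (Y : Type) (idx : Y -> nat) (F : Y -> Y) (y y' : Y) : nat :=
  xget 0%N [set n | separated idx F y y' n /\
                    (forall m, (m < n)%N -> ~ separated idx F y y' m)].

(* d_theta(y,y') = theta^{s(y,y')}, with the convention theta^oo = 0 when
   the orbits are never separated. *)
Definition dtheta (R : realType) (Y : Type) (idx : Y -> nat) (F : Y -> Y)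
  (theta : R) (y y' : Y) : R :=
  if `[< exists n, separated idx F y y' n >] then theta ^+ sep_time idx F y y' else 0.

Definition normtheta (R : realType) (Y : Type) (idx : Y -> nat) (F : Y -> Y)
  (theta : R) (H : Y -> R) (j : nat) : R :=
  sup [set `|H y| | y in piece idx j] +
  sup [set `|H p.1 - H p.2| / dtheta idx F theta p.1 p.2 |
        p in [set p : Y * Y | idx p.1 = j /\ idx p.2 = j /\ p.1 <> p.2]].

Definition ttau (R : realType) (Y : Type) (idx : Y -> nat) (F : Y -> Y)
  (theta : R) (H : Y -> R) (y : Y) : nat :=
  (Num.truncn (normtheta idx F theta H (idx y))).+1.

Definition Delta (R : realType) (Y : Type) (idx : Y -> nat) (F : Y -> Y)
  (theta : R) (H : Y -> R) : set (Y * nat) :=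
  [set p | (p.2 < ttau idx F theta H p.1)%N].

Definition htilde (R : realType) (Y : Type) (idx : Y -> nat) (F : Y -> Y)
  (theta : R) (H : Y -> R) (y : Y) (l : nat) : R :=
  H y / (ttau idx F theta H y)%:R.

(* Main.v *)
Require Import Defs.
From HB Require Import structures.
From mathcomp Require Import all_boot all_order all_algebra.
From mathcomp Require Import all_classical all_reals.
From mathcomp Require Import lra.
Import Order.TTheory GRing.Theory Num.Theory.
Local Open Scope classical_set_scope.
Local Open Scope ring_scope.

Section Aux.
Variables (R : realType) (Y : Type) (idx : Y -> nat) (F : Y -> Y)
  (theta : R) (H : Y -> R) (C : R).
Hypothesis th : 0 < theta < 1.
Hypothesis Hpos : forall y, 0 < H y.
Hypothesis C1 : 1 <= C.
Hypothesis HL : forall y y', idx y = idx y' -> y <> y' ->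
     `|H y - H y'| <= C * inf [set H z | z in piece idx (idx y)] * dtheta idx F theta y y'.

Let d := dtheta idx F theta.

Lemma d_ge0 y y' : 0 <= d y y'.
Proof.
rewrite /d /dtheta; case: ifP => _ //.
case/andP: th => t0 _; exact: exprn_ge0 (ltW t0).
Qed.

Lemma d_le1 y y' : d y y' <= 1.
Proof.
rewrite /d /dtheta; case: ifP => _ //.
case/andP: th => t0 t1; exact: exprn_ile1 (ltW t0) (ltW t1).
Qed.

Let m j := inf [set H z | z in piece idx j].

Lemma m_ge0 y : 0 <= m (idx y).
Proof.
apply: lb_le_inf; first by exists (H y), y.
by move=> _ [z _ <-]; exact: ltW.
Qed.

Lemma m_le y : m (idx y) <= H y.
Proof.
apply: ge_inf; last by exists y.
by exists 0 => _ [z _ <-]; exact: ltW.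
Qed.

Lemma diff_le y y' : idx y = idx y' -> `|H y - H y'| <= C * m (idx y) * d y y'.
Proof.
move=> e; have [<-|ne] := pselect (y = y'); last exact: HL.
rewrite subrr normr0; apply: mulr_ge0; last exact: d_ge0.
apply: mulr_ge0; [exact: le_trans C1|exact: m_ge0].
Qed.

Lemma diff_le' y y' : idx y = idx y' -> `|H y - H y'| <= C * H y.
Proof.
move=> e; apply: le_trans (diff_le _ _ e) _.
have C0 : 0 <= C by exact: le_trans C1.
rewrite -[leRHS]mulr1; apply: ler_pM.
- by apply: mulr_ge0 => //; exact: m_ge0.
- exact: d_ge0.
- by apply: ler_wpM2l => //; exact: m_le.
- exact: d_le1.
Qed.

Let S1 j := sup [set `|H y| | y in piece idx j].
Let S2 j := sup [set `|H p.1 - H p.2| / d p.1 p.2 |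
        p in [set p : Y * Y | idx p.1 = j /\ idx p.2 = j /\ p.1 <> p.2]].

Lemma S1_bounds y : H y <= S1 (idx y) <= (1 + C) * H y.
Proof.
have ub : ubound [set `|H z| | z in piece idx (idx y)] ((1 + C) * H y).
  move=> _ [z zj <-]; have := diff_le' _ _ (esym zj).
  rewrite (gtr0_norm (Hpos z)) mulrDl mul1r => /ler_normlP [h1 h2]; lra.
apply/andP; split; last by apply: ge_sup => //; exists `|H y|, y.
rewrite -[H y]gtr0_norm //; apply: sup_upper_bound; last by exists y.
by split; [exists `|H y|, y|exists ((1 + C) * H y)].
Qed.

Lemma S2_bounds y : 0 <= S2 (idx y) <= C * H y.
Proof.
rewrite /S2; set A := [set _ | _ in _].
have ub : ubound A (C * H y).
  move=> _ [[a b] /= [ea [eb ne]] <-].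
  have [d0|dp] := eqVneq (d a b) 0; first by rewrite d0 invr0 mulr0; apply: mulr_ge0 => //;
     [exact: le_trans C1| exact: ltW].
  have dpos : 0 < d a b by rewrite lt_def dp d_ge0.
  rewrite ler_pdivrMr //; apply: le_trans (diff_le a b _) _; first by rewrite ea eb.
  rewrite ea; apply: ler_wpM2r; first exact: d_ge0.
  by apply: ler_wpM2l; [exact: le_trans C1|exact: m_le].
have [A0|/eqP/set0P [x Ax]] := pselect (A = set0).
  by rewrite A0 sup0 lexx /=; apply: mulr_ge0 => //; [exact: le_trans C1|exact: ltW].
apply/andP; split; last by apply: ge_sup => //; exists x.
have x0 : 0 <= x by case: Ax => p _ <-; apply: divr_ge0 => //; exact: d_ge0.
apply: (le_trans x0).
by apply: sup_upper_bound => //; split; [exists x|exists (C * H y)].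
Qed.

Lemma S2_ge y y' : idx y = idx y' -> y <> y' -> 0 < d y y' ->
  `|H y - H y'| <= S2 (idx y) * d y y'.
Proof.
move=> e ne dp; rewrite -ler_pdivrMr //.
have := S2_bounds y => /andP [_ _].
apply: sup_upper_bound; last by exists (y, y').
split; first by exists (`|H y - H y'| / d y y'), (y, y').
exists (C * H y) => _ [[a b] /= [ea [eb ne']] <-].
have [d0|dp'] := eqVneq (d a b) 0; first by rewrite d0 invr0 mulr0; apply: mulr_ge0 => //;
   [exact: le_trans C1| exact: ltW].
have dpos : 0 < d a b by rewrite lt_def dp' d_ge0.
rewrite ler_pdivrMr //; apply: le_trans (diff_le a b _) _; first by rewrite ea eb.
rewrite ea; apply: ler_wpM2r; first exact: d_ge0.
by apply: ler_wpM2l; [exact: le_trans C1|exact: m_le].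
Qed.

Let tau y := ttau idx F theta H y.
Let N j := normtheta idx F theta H j.

Lemma N_eq j : N j = S1 j + S2 j. Proof. by []. Qed.

Lemma N_ge0 y : 0 <= N (idx y).
Proof.
rewrite N_eq; have /andP[h1 _] := S1_bounds y; have /andP[h2 _] := S2_bounds y.
have := Hpos y; lra.
Qed.

Lemma tau_gt y : N (idx y) < (tau y)%:R.
Proof. exact: truncnS_gt. Qed.

Lemma tau_le y : (tau y)%:R <= N (idx y) + 1.
Proof.
rewrite /tau /ttau -/(N (idx y)) -natr1 lerD2r truncn_le; exact: N_ge0.
Qed.

Hypothesis hinf : 0 < inf (range H).

Let ht y l := htilde idx F theta H y l.

Lemma tau_pos y : 0 < (tau y)%:R :> R.
Proof. by rewrite ltr0n. Qed.

Lemma ht_pos y l : 0 < ht y l.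
Proof. by rewrite /ht /htilde divr_gt0 //; exact: tau_pos. Qed.

Lemma ht_le1 y l : `|ht y l| <= 1.
Proof.
rewrite gtr0_norm; last exact: ht_pos.
rewrite /ht /htilde -/(tau y) ler_pdivrMr ?mul1r; last exact: tau_pos.
have := tau_gt y; rewrite N_eq; have /andP[h1 _] := S1_bounds y; have /andP[h2 _] := S2_bounds y.
lra.
Qed.

Let m0 := inf (range H).

Lemma m0_le y : m0 <= H y.
Proof. by apply: ge_inf; [exists 0 => _ [z _ <-]; exact: ltW | exists y]. Qed.

Lemma ht_ge y l : m0 / ((1 + 2 * C) * m0 + 1) <= ht y l.
Proof.
have C0 : 0 <= C by exact: le_trans C1.
have hy := m0_le y.
have tp := tau_pos y.
rewrite /ht /htilde -/(tau y) ler_pdivlMr // mulrAC ler_pdivrMr; last first.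
  have : 0 <= (1 + 2 * C) * m0 by apply: mulr_ge0 => //; [lra|exact: ltW].
  lra.
have t1 := tau_le y; rewrite N_eq in t1.
have /andP[_ h1] := S1_bounds y; have /andP[_ h2] := S2_bounds y.
have t2 : (tau y)%:R <= (1 + 2 * C) * H y + 1 by lra.
apply: le_trans (_ : m0 * ((1 + 2 * C) * H y + 1) <= _).
  by apply: ler_wpM2l => //; exact: ltW.
have : 0 <= (H y - m0) * 1 by rewrite mulr1; lra.
rewrite !mulrDr !mulrDl !mul1r; nra.
Qed.

Lemma main :
  (forall y, H y = \sum_(0 <= l < ttau idx F theta H y) htilde idx F theta H y l) /\
  (0 < inf [set htilde idx F theta H p.1 p.2 | p in Delta idx F theta H] /\
   inf [set htilde idx F theta H p.1 p.2 | p in Delta idx F theta H]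
     <= sup [set `|htilde idx F theta H p.1 p.2| | p in Delta idx F theta H] /\
   (forall p, Delta idx F theta H p -> `|htilde idx F theta H p.1 p.2| <= 1) /\
   sup [set `|htilde idx F theta H p.1 p.2| | p in Delta idx F theta H] <= 1 /\
   (forall y y' l, idx y = idx y' -> (l < ttau idx F theta H y)%N ->
      `|htilde idx F theta H y l - htilde idx F theta H y' l| <= dtheta idx F theta y y')).
Proof.
have [[y0 _]|ne] := pselect (exists y : Y, True); last first.
  have e0 : range H = set0.
    by apply/seteqP; split => // x [y _ _]; apply: ne; exists y.
  by have := hinf; rewrite e0 inf0 ltxx.
have D0 : Delta idx F theta H (y0, 0%N) by [].
split.
  by move=> y; rewrite sumr_const_nat subn0 /htilde -mulr_natr mul1r -[_ *+ ttau _ _ _ _ _]mulr_natr divfK // pnatr_eq0.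
have C0 : 0 <= C by exact: le_trans C1.
have m0p : 0 < m0 by [].
have cpos : 0 < m0 / ((1 + 2 * C) * m0 + 1).
  apply: divr_gt0 => //; have : 0 <= (1 + 2 * C) * m0 by apply: mulr_ge0 => //; [lra|exact: ltW].
  lra.
have hsup : has_sup [set `|htilde idx F theta H p.1 p.2| | p in Delta idx F theta H].
  by split; [exists `|ht y0 0|, (y0, 0%N) | exists 1; move=> _ [p _ <-]; exact: (ht_le1 p.1 p.2)].
split.
  apply: (lt_le_trans cpos); apply: lb_le_inf; first by exists (ht y0 0), (y0, 0%N).
  by move=> _ [p _ <-]; exact: (ht_ge p.1 p.2).
split.
  apply: (@le_trans _ _ (ht y0 0)).
    by apply: ge_inf; [exists 0 => _ [p _ <-]; exact: ltW (ht_pos p.1 p.2)|exists (y0, 0%N)].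
  apply: le_trans (ler_norm _) _.
  by apply: sup_upper_bound => //; exists (y0, 0%N).
split; first by move=> p _; exact: (ht_le1 p.1 p.2).
split.
  by apply: ge_sup; [exists `|ht y0 0|, (y0, 0%N) | move=> _ [p _ <-]; exact: (ht_le1 p.1 p.2)].
move=> y y' l e _.
have et : tau y = tau y' by rewrite /tau /ttau e.
rewrite /htilde -/(tau y) -/(tau y') -et -mulrBl normrM.
have tp := tau_pos y.
rewrite [`|_^-1|]gtr0_norm ?invr_gt0 // ler_pdivrMr //.
have [<-|ne] := pselect (y = y'); first by rewrite subrr normr0 mulr_ge0 // ?(ltW tp) ?d_ge0.
have [d0|dp] := eqVneq (d y y') 0.
  have := diff_le y y' e; rewrite -/d d0 !mulr0 mul0r => h.
  by apply: le_trans h _.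
have dpos : 0 < d y y' by rewrite lt_def dp d_ge0.
apply: le_trans (S2_ge y y' e ne dpos) _.
rewrite [leRHS]mulrC; apply: ler_wpM2r; first exact: d_ge0.
apply: le_trans _ (ltW (tau_gt y)); rewrite N_eq.
have /andP[h1 _] := S1_bounds y; have := Hpos y; lra.
Qed.
End Aux.
Theorem lemma3p1 (R : realType) (Y : Type) (idx : Y -> nat) (F : Y -> Y)
  (theta : R) (H : Y -> R) (C : R) :
  0 < theta < 1 ->
  (forall y, 0 < H y) ->
  1 <= C ->
  (forall y y', idx y = idx y' -> y <> y' ->
     `|H y - H y'| <= C * inf [set H z | z in piece idx (idx y)] * dtheta idx F theta y y') ->
  0 < inf (range H) ->
  (* (a) *)
  (forall y, H y = \sum_(0 <= l < ttau idx F theta H y) htilde idx F theta H y l) /\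
  (* (b) *)
  (0 < inf [set htilde idx F theta H p.1 p.2 | p in Delta idx F theta H] /\
   inf [set htilde idx F theta H p.1 p.2 | p in Delta idx F theta H]
     <= sup [set `|htilde idx F theta H p.1 p.2| | p in Delta idx F theta H] /\
   (forall p, Delta idx F theta H p -> `|htilde idx F theta H p.1 p.2| <= 1) /\
   sup [set `|htilde idx F theta H p.1 p.2| | p in Delta idx F theta H] <= 1 /\
   (forall y y' l, idx y = idx y' -> (l < ttau idx F theta H y)%N ->
      `|htilde idx F theta H y l - htilde idx F theta H y' l| <= dtheta idx F theta y y')).
Proof.
move=> th Hpos C1 HL hinf.
exact: (@main R Y idx F theta H C th Hpos C1 HL hinf).
Qed.
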